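(* A function $\phi:\mathbb{Z}\to\mathbb{H}$ is an extreme point of the convex set $\mathcal{P}^{\mathbb{H}}_*(\mathbb{Z})$ if and only if $\phi$ is a group homomorphism from $(\mathbb{Z},+)$ to $\mathbb{S}$, i.e. $\phi(n)=s^n$ for some $s\in\mathbb{S}$.
   Context: $\mathbb{H}$ is the real quaternion algebra and $\mathbb{S}=\{q\in\mathbb{H}:|q|=1\}$ is the multiplicative group of unit quaternions. For an abelian group $G$ (with the involution $g^*=-g$), a function $\phi:G\to\mathbb{H}$ is positive definite if for all $k$, $g_1,\dots,g_k\in G$ and $q_1,\dots,q_k\in\mathbb{H}$, $\sum_{i,j=1}^k\overline{q_i}\,\phi(g_j-g_i)\,q_j$ is a nonnegative real number. $\mathcal{P}^{\mathbb{H}}_*(G)$ denotes the convex set of positive definite $\phi:G\to\mathbb{H}$ with $\phi(0)=1$. *)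

(* Defs.v *)
From mathcomp Require Import all_boot all_order all_algebra.
From mathcomp Require Import reals.
Set Implicit Arguments. Unset Strict Implicit. Unset Printing Implicit Defensive.
Import Order.TTheory GRing.Theory Num.Theory.
Local Open Scope ring_scope.

Record quat (R : realType) := Quat { qre : R; qi : R; qj : R; qk : R }.

Section Quat.
Variable R : realType.
Implicit Types p q : quat R.

Definition qzero : quat R := Quat 0 0 0 0.
Definition qone : quat R := Quat 1 0 0 0.
Definition qadd p q : quat R :=
  Quat (qre p + qre q) (qi p + qi q) (qj p + qj q) (qk p + qk q).
Definition qscale (t : R) q : quat R := Quat (t * qre q) (t * qi q) (t * qj q) (t * qk q).
Definition qmul p q : quat R :=
  Quat (qre p * qre q - qi p * qi q - qj p * qj q - qk p * qk q)
       (qre p * qi q + qi p * qre q + qj p * qk q - qk p * qj q)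
       (qre p * qj q - qi p * qk q + qj p * qre q + qk p * qi q)
       (qre p * qk q + qi p * qj q - qj p * qi q + qk p * qre q).
Definition qconj q : quat R := Quat (qre q) (- qi q) (- qj q) (- qk q).
Definition qnorm2 q : R := qre q ^+ 2 + qi q ^+ 2 + qj q ^+ 2 + qk q ^+ 2.
Definition qunit q : Prop := qnorm2 q = 1.
Definition qnonneg_real q : Prop := qi q = 0 /\ qj q = 0 /\ qk q = 0 /\ 0 <= qre q.

(* positive definite phi : Z -> H  (abelian group Z, g^* = -g) *)
Definition pos_def (phi : int -> quat R) : Prop :=
  forall (k : nat) (g : 'I_k -> int) (q : 'I_k -> quat R),
    qnonneg_real (\big[qadd/qzero]_(i < k) \big[qadd/qzero]_(j < k)
                    qmul (qmul (qconj (q i)) (phi (g j - g i))) (q j)).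

Definition Pstar (phi : int -> quat R) : Prop := pos_def phi /\ phi 0 = qone.

Definition extreme_Pstar (phi : int -> quat R) : Prop :=
  Pstar phi /\
  forall (phi1 phi2 : int -> quat R) (t : R),
    0 < t < 1 -> Pstar phi1 -> Pstar phi2 ->
    (forall n, phi n = qadd (qscale t (phi1 n)) (qscale (1 - t) (phi2 n))) ->
    forall n, phi1 n = phi n /\ phi2 n = phi n.

Definition hom_to_S (phi : int -> quat R) : Prop :=
  (forall m n, phi (m + n) = qmul (phi m) (phi n)) /\ (forall n, qunit (phi n)).
End Quat.

(* Main.v *)
Require Import Defs.
From mathcomp Require Import all_boot all_order all_algebra.
From mathcomp Require Import reals.
From mathcomp Require Import ring lra zify.
From HB Require Import structures.
Set Implicit Arguments. Unset Strict Implicit. Unset Printing Implicit Defensive.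
Import Order.TTheory GRing.Theory Num.Theory.
Local Open Scope ring_scope.

Lemma quat_eqP {R : realType} (p q : quat R) :
  qre p = qre q -> qi p = qi q -> qj p = qj q -> qk p = qk q -> p = q.
Proof. by case: p; case: q => /= ???? ???? -> -> -> ->. Qed.

Ltac qext := apply: quat_eqP => /=.

Lemma qaddA {R : realType} : associative (@qadd R).
Proof. by move=> p q r; qext; ring. Qed.
Lemma qaddC {R : realType} : commutative (@qadd R).
Proof. by move=> p q; qext; ring. Qed.
Lemma qadd0q {R : realType} : left_id (@qzero R) (@qadd R).
Proof. by move=> p; qext; ring. Qed.

HB.instance Definition _ (R : realType) :=
  Monoid.isComLaw.Build (quat R) (@qzero R) (@qadd R) qaddA qaddC qadd0q.

Lemma qmulA {R : realType} : associative (@qmul R).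
Proof. by move=> p q r; qext; ring. Qed.
Lemma qmulDl {R : realType} (p q r : quat R) : qmul (qadd p q) r = qadd (qmul p r) (qmul q r).
Proof. by qext; ring. Qed.
Lemma qmulDr {R : realType} (p q r : quat R) : qmul r (qadd p q) = qadd (qmul r p) (qmul r q).
Proof. by qext; ring. Qed.
Lemma qmul0q {R : realType} (p : quat R) : qmul (qzero R) p = qzero R.
Proof. by qext; ring. Qed.
Lemma qmulq0 {R : realType} (p : quat R) : qmul p (qzero R) = qzero R.
Proof. by qext; ring. Qed.
Lemma qmul1q {R : realType} (p : quat R) : qmul (qone R) p = p.
Proof. by qext; ring. Qed.
Lemma qmulq1 {R : realType} (p : quat R) : qmul p (qone R) = p.
Proof. by qext; ring. Qed.
Lemma qconjM {R : realType} (p q : quat R) : qconj (qmul p q) = qmul (qconj q) (qconj p).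
Proof. by qext; ring. Qed.
Lemma qconjD {R : realType} (p q : quat R) : qconj (qadd p q) = qadd (qconj p) (qconj q).
Proof. by qext; ring. Qed.
Lemma qconjK {R : realType} (p : quat R) : qconj (qconj p) = p.
Proof. by qext; ring. Qed.
Lemma qconj0 {R : realType} : qconj (@qzero R) = qzero R.
Proof. by qext; ring. Qed.



Lemma qsum_mulr {R : realType} (I : finType) (F : I -> quat R) x :
  qmul (\big[@qadd _/(qzero _)]_i F i) x = \big[@qadd _/(qzero _)]_i qmul (F i) x.
Proof.
apply: (big_morph (fun y => qmul y x)); last exact: qmul0q.
by move=> a b; rewrite qmulDl.
Qed.
Lemma qsum_mull {R : realType} (I : finType) (F : I -> quat R) x :
  qmul x (\big[@qadd _/(qzero _)]_i F i) = \big[@qadd _/(qzero _)]_i qmul x (F i).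
Proof.
apply: (big_morph (fun y => qmul x y)); last exact: qmulq0.
by move=> a b; rewrite qmulDr.
Qed.
Lemma qsum_conj {R : realType} (I : finType) (F : I -> quat R) :
  qconj (\big[@qadd _/(qzero _)]_i F i) = \big[@qadd _/(qzero _)]_i qconj (F i).
Proof.
apply: (big_morph (@qconj R)); last exact: qconj0.
by move=> a b; rewrite qconjD.
Qed.
Lemma qsum_scale {R : realType} (I : finType) (F : I -> quat R) r :
  qscale r (\big[@qadd _/(qzero _)]_i F i) = \big[@qadd _/(qzero _)]_i qscale r (F i).
Proof.
apply: (big_morph (qscale r)); last by qext; ring.
by move=> a b; qext; ring.
Qed.

Lemma qconj_normE {R : realType} (p : quat R) :
  qmul (qconj p) p = Quat (qnorm2 p) 0 0 0.
Proof. by rewrite /qnorm2; qext; ring. Qed.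

Lemma pos_def_fin {R : realType} (phi : int -> quat R) (T : finType)
  (g : T -> int) (q : T -> quat R) : pos_def phi ->
  qnonneg_real (\big[@qadd _/(qzero _)]_(i : T) \big[@qadd _/(qzero _)]_(j : T)
                    qmul (qmul (qconj (q i)) (phi (g j - g i))) (q j)).
Proof.
move=> pd.
have := pd #|T| (fun i => g (enum_val i)) (fun i => q (enum_val i)).
have E : forall (F : T -> quat R), \big[@qadd _/(qzero _)]_(i : T) F i =
     \big[@qadd _/(qzero _)]_(i < #|T|) F (enum_val i).
  move=> F; rewrite -big_enum_val; apply: eq_bigl => x; by rewrite inE.
move=> H; rewrite E; under eq_bigr do rewrite E; exact: H.
Qed.
Lemma pd2 {R : realType} (phi : int -> quat R) n w : Pstar phi ->
  qnonneg_real (qadd (qadd (qmul (qconj w) w) (qmul (qconj w) (phi n)))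
       (qadd (qmul (phi (- n)) w) (qone R))).
Proof.
move=> [pd p0].
have := pos_def_fin (fun b : bool => if b then 0 else n)
                    (fun b : bool => if b then w else qone R) pd.
have c1 : qconj (qone R) = qone R by qext; ring.
by rewrite !big_bool /= !subrr sub0r subr0 p0 !qmulq1 c1 qmul1q.
Qed.

Lemma Pstar_herm {R : realType} (phi : int -> quat R) n : Pstar phi ->
  phi (- n) = qconj (phi n).
Proof.
move=> P; have p0 := P.2.
have H := pd2 n _ P; move: (H (qone R)) (H (Quat 0 1 0 0)) (H (Quat 0 0 1 0)).
rewrite /qnonneg_real.
case: (phi n) => a0 a1 a2 a3; case: (phi (-n)) => b0 b1 b2 b3 /=.
move=> [h1 [h2 [h3 _]]] [g1 [g2 [g3 _]]] [k1 [k2 [k3 _]]].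
qext; lra.
Qed.

Lemma Pstar_le1 {R : realType} (phi : int -> quat R) n : Pstar phi ->
  qnorm2 (phi n) <= 1.
Proof.
move=> P; have p0 := P.2.
have := pd2 n (Quat (- qre (phi n)) (- qi (phi n)) (- qj (phi n)) (- qk (phi n))) P.
rewrite (Pstar_herm n P) /qnonneg_real /qnorm2.
case: (phi n) => a0 a1 a2 a3 /= [_ [_ [_ h]]].
nra.
Qed.

Lemma qmul_conj_r {R : realType} (p : quat R) :
  qmul p (qconj p) = Quat (qnorm2 p) 0 0 0.
Proof. by rewrite /qnorm2; qext; ring. Qed.

Lemma qnorm_one {R : realType} (p : quat R) : qunit p -> Quat (qnorm2 p) 0 0 0 = qone R.
Proof. by rewrite /qunit => ->. Qed.

Lemma hom_zero {R : realType} (phi : int -> quat R) : hom_to_S phi -> phi 0 = qone R.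
Proof.
move=> [hm hu].
have e : phi 0 = qmul (phi 0) (phi 0) by rewrite -hm addr0.
have := qconj_normE (phi 0); rewrite qnorm_one // => E.
by rewrite -[phi 0]qmul1q -E -qmulA -e E.
Qed.

Lemma hom_neg {R : realType} (phi : int -> quat R) m : hom_to_S phi ->
  phi (- m) = qconj (phi m).
Proof.
move=> H; have [hm hu] := H.
have e : qmul (phi (- m)) (phi m) = qone R by rewrite -hm addNr hom_zero.
have := qmul_conj_r (phi m); rewrite qnorm_one // => E.
by rewrite -[phi (- m)]qmulq1 -E qmulA e qmul1q.
Qed.

Lemma hom_diff {R : realType} (phi : int -> quat R) a b : hom_to_S phi ->
  phi (b - a) = qmul (qconj (phi a)) (phi b).
Proof. by move=> H; rewrite addrC H.1 hom_neg. Qed.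

Lemma hom_Pstar {R : realType} (phi : int -> quat R) : hom_to_S phi -> Pstar phi.
Proof.
move=> H; split; last exact: hom_zero.
move=> k g q.
set v := fun i => qmul (phi (g i)) (q i).
have E : forall i j, qmul (qmul (qconj (q i)) (phi (g j - g i))) (q j) =
                     qmul (qconj (v i)) (v j).
  move=> i j; rewrite hom_diff // /v.
  by case: (q i) (q j) (phi (g i)) (phi (g j)) => ???? [????] [????] [????]; qext; ring.
under eq_bigr => i _ do under eq_bigr => j _ do rewrite E.
under eq_bigr => i _ do rewrite -qsum_mull.
rewrite -qsum_mulr -qsum_conj qconj_normE /qnonneg_real /qnorm2 /=.
do 3! split => //.
set V := \big[@qadd _/(qzero _)]_(i < k) v i.
by case: V => a b c d /=; nra.
Qed.

Lemma strict_conv {R : realType} (a b : quat R) (t : R) :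
  0 < t < 1 -> qnorm2 a <= 1 -> qnorm2 b <= 1 ->
  qnorm2 (qadd (qscale t a) (qscale (1 - t) b)) = 1 -> a = b.
Proof.
move=> /andP [t0 t1]; rewrite /qnorm2.
case: a => a0 a1 a2 a3; case: b => b0 b1 b2 b3 /= ha hb hx.
set d := (a0 - b0) ^+ 2 + (a1 - b1) ^+ 2 + (a2 - b2) ^+ 2 + (a3 - b3) ^+ 2.
have Ed : t * (1 - t) * d = t * (a0 ^+ 2 + a1 ^+ 2 + a2 ^+ 2 + a3 ^+ 2)
   + (1 - t) * (b0 ^+ 2 + b1 ^+ 2 + b2 ^+ 2 + b3 ^+ 2) - 1.
  move: hx; set X := (X in X = 1) => hx.
  have Ed : t * (1 - t) * d = t * (a0 ^+ 2 + a1 ^+ 2 + a2 ^+ 2 + a3 ^+ 2)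
   + (1 - t) * (b0 ^+ 2 + b1 ^+ 2 + b2 ^+ 2 + b3 ^+ 2) - X by rewrite /X /d; ring.
  by rewrite Ed hx.
have tt : 0 < t * (1 - t) by apply: mulr_gt0; lra.
have d0 : d <= 0.
  have : t * (1 - t) * d <= 0 by rewrite Ed; nra.
  by rewrite pmulr_rle0.
move: d0; rewrite /d.
have := sqr_ge0 (a0 - b0); have := sqr_ge0 (a1 - b1);
have := sqr_ge0 (a2 - b2); have := sqr_ge0 (a3 - b3).
set x0 := (a0 - b0) ^+ 2; set x1 := (a1 - b1) ^+ 2;
set x2 := (a2 - b2) ^+ 2; set x3 := (a3 - b3) ^+ 2 => ?????.
have z0 : x0 = 0 by lra.
have z1 : x1 = 0 by lra.
have z2 : x2 = 0 by lra.
have z3 : x3 = 0 by lra.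
move: z0 z1 z2 z3; rewrite /x0 /x1 /x2 /x3 => /eqP + /eqP + /eqP + /eqP.
rewrite !sqrf_eq0 !subr_eq0 => /eqP -> /eqP -> /eqP -> /eqP ->.
by [].
Qed.

Lemma hom_extreme {R : realType} (phi : int -> quat R) : hom_to_S phi -> extreme_Pstar phi.
Proof.
move=> H; split; first exact: hom_Pstar.
move=> p1 p2 t tI P1 P2 E n.
have eq12 : p1 n = p2 n.
  apply: (@strict_conv _ _ _ t) => //; try exact: Pstar_le1.
  by rewrite -E; exact: H.2.
have : phi n = p1 n.
  rewrite E -eq12; case: (p1 n) => ????; qext; ring.
by move=> e; rewrite e -eq12.
Qed.

Lemma int_ind2 (P : int -> Prop) : P 0 -> (forall n, P n -> P (n + 1)) ->
  (forall n, P n -> P (n - 1)) -> forall n, P n.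
Proof.
move=> P0 Pu Pd; case=> k.
  elim: k => // k IH; have -> : Posz k.+1 = Posz k + 1 by lia.
  exact: Pu.
elim: k => [|k IH].
  have -> : Negz 0 = 0 - 1 by lia.
  exact: Pd.
have -> : Negz k.+1 = Negz k - 1 by lia.
exact: Pd.
Qed.

Lemma qnorm2M {R : realType} (p q : quat R) : qnorm2 (qmul p q) = qnorm2 p * qnorm2 q.
Proof. by rewrite /qnorm2 /=; ring. Qed.
Lemma qnorm2C {R : realType} (p : quat R) : qnorm2 (qconj p) = qnorm2 p.
Proof. by rewrite /qnorm2 /=; ring. Qed.

Lemma hom_of_step {R : realType} (h : int -> quat R) (e : quat R) :
  h 0 = qone R -> qunit e -> (forall n, h (n + 1) = qmul (h n) e) -> hom_to_S h.
Proof.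
move=> h0 ue hs.
have ee : qmul e (qconj e) = qone R by rewrite qmul_conj_r qnorm_one.
have hd : forall n, h (n - 1) = qmul (h n) (qconj e).
  move=> n; have -> : n = (n - 1) + 1 by rewrite subrK.
  by rewrite hs -qmulA ee qmulq1 addrK.
split.
  move=> m; apply: int_ind2; first by rewrite addr0 h0 qmulq1.
    by move=> n IH; rewrite addrA !hs IH qmulA.
  by move=> n IH; rewrite addrA !hd IH qmulA.
apply: int_ind2; first by rewrite h0 /qunit /qnorm2 /=; ring.
  by move=> n IH; rewrite /qunit hs qnorm2M IH ue mulr1.
by move=> n IH; rewrite /qunit hd qnorm2M IH qnorm2C ue mulr1.
Qed.

Lemma step_of_unit {R : realType} (phi : int -> quat R) n : Pstar phi ->
  qunit (phi 1) -> phi (n + 1) = qmul (phi n) (phi 1).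
Proof.
move=> P u1.
set s := phi 1.
set D := Quat (qre (phi (n + 1)) - qre (qmul (phi n) s))
              (qi (phi (n + 1)) - qi (qmul (phi n) s))
              (qj (phi (n + 1)) - qj (qmul (phi n) s))
              (qk (phi (n + 1)) - qk (qmul (phi n) s)).
have := pos_def_fin (fun i : 'I_3 => match val i with 0 => 0 | 1 => 1 | _ => - n end)
   (fun i : 'I_3 => match val i with 0 => Quat (- qre s) (- qi s) (- qj s) (- qk s)
                  | 1 => qone R | _ => Quat (- qre D) (- qi D) (- qj D) (- qk D) end) P.1.
rewrite !big_ord_recr !big_ord0 /=.
rewrite !subrr !subr0 !sub0r !opprK -opprD (addrC 1 n).
rewrite (Pstar_herm 1 P) (Pstar_herm n P) (Pstar_herm (n + 1) P) P.2 /D /s.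
move: (phi 1) (phi n) (phi (n + 1)) u1 => [s0 s1 s2 s3] [a0 a1 a2 a3] [b0 b1 b2 b3].
rewrite /qunit /qnorm2 /= => u1 [_ [_ [_]]].
set X := (X in 0 <= X) => h.
set d0 := b0 - (a0 * s0 - a1 * s1 - a2 * s2 - a3 * s3).
set d1 := b1 - (a0 * s1 + a1 * s0 + a2 * s3 - a3 * s2).
set d2 := b2 - (a0 * s2 - a1 * s3 + a2 * s0 + a3 * s1).
set d3 := b3 - (a0 * s3 + a1 * s2 - a2 * s1 + a3 * s0).
have EX : X = 1 - (s0 ^+ 2 + s1 ^+ 2 + s2 ^+ 2 + s3 ^+ 2)
              - (d0 ^+ 2 + d1 ^+ 2 + d2 ^+ 2 + d3 ^+ 2).
  by rewrite /X /= /d0 /d1 /d2 /d3; ring.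
rewrite EX u1 in h.
have := sqr_ge0 d0; have := sqr_ge0 d1; have := sqr_ge0 d2; have := sqr_ge0 d3.
move: h; set y0 := d0 ^+ 2; set y1 := d1 ^+ 2; set y2 := d2 ^+ 2; set y3 := d3 ^+ 2.
move=> h g3 g2 g1 g0.
have : y0 = 0 by lra. have : y1 = 0 by lra. have : y2 = 0 by lra. have : y3 = 0 by lra.
rewrite /y0 /y1 /y2 /y3 => /eqP + /eqP + /eqP + /eqP.
rewrite !sqrf_eq0 /d0 /d1 /d2 /d3 !subr_eq0 => /eqP e3 /eqP e2 /eqP e1 /eqP e0.
by qext.
Qed.

Definition mult {R : realType} (S : finType) (d : S -> int) (c : S -> quat R)
  (phi : int -> quat R) (n : int) : quat R :=
  \big[@qadd _/(qzero _)]_(k : S) \big[@qadd _/(qzero _)]_(l : S)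
     qmul (qmul (qconj (c k)) (phi (n + d l - d k))) (c l).

Lemma qpair {R : realType} (I J : finType) (F : I -> J -> quat R) :
  \big[@qadd _/(qzero _)]_i \big[@qadd _/(qzero _)]_j F i j =
  \big[@qadd _/(qzero _)]_(p : I * J) F p.1 p.2.
Proof. by rewrite pair_big; apply: eq_bigl. Qed.

Lemma pos_def_mult {R : realType} (S : finType) (d : S -> int) (c : S -> quat R)
  (phi : int -> quat R) : pos_def phi -> pos_def (mult d c phi).
Proof.
move=> pd K g q; rewrite /mult.
have := pos_def_fin (fun p : 'I_K * S => g p.1 + d p.2)
                    (fun p : 'I_K * S => qmul (c p.2) (q p.1)) pd.
have E : forall i j, qmul (qmul (qconj (q i))
   (\big[@qadd _/(qzero _)]_k \big[@qadd _/(qzero _)]_l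
     qmul (qmul (qconj (c k)) (phi (g j - g i + d l - d k))) (c l))) (q j) =
   \big[@qadd _/(qzero _)]_k \big[@qadd _/(qzero _)]_l
     qmul (qmul (qconj (qmul (c k) (q i))) (phi ((g j + d l) - (g i + d k)))) (qmul (c l) (q j)).
  move=> i j.
  rewrite qsum_mull qsum_mulr; apply: eq_bigr => k _.
  rewrite qsum_mull qsum_mulr; apply: eq_bigr => l _.
  have -> : g j + d l - (g i + d k) = g j - g i + d l - d k by ring.
  case: (q i) (q j) (c k) (c l) (phi _) => ???? [????] [????] [????] [????].
  by qext; ring.
move=> H.
under eq_bigr => i _ do under eq_bigr => j _ do rewrite E.
under eq_bigr => i _ do rewrite exchange_big.
under eq_bigr => i _ do under eq_bigr => k _ do rewrite qpair.
by rewrite qpair.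
Qed.

Lemma qnonneg_scale {R : realType} (r : R) (x : quat R) :
  0 <= r -> qnonneg_real x -> qnonneg_real (qscale r x).
Proof.
move=> r0; case: x => a b c d [/= -> [-> [-> h]]].
by rewrite /qnonneg_real /= !mulr0; do 3! split => //; apply: mulr_ge0.
Qed.

Lemma pos_def_scale {R : realType} (r : R) (f : int -> quat R) :
  0 <= r -> pos_def f -> pos_def (fun n => qscale r (f n)).
Proof.
move=> r0 pd k g q.
have E : forall i j, qmul (qmul (qconj (q i)) (qscale r (f (g j - g i)))) (q j) =
   qscale r (qmul (qmul (qconj (q i)) (f (g j - g i))) (q j)).
  by move=> i j; case: (q i) (q j) (f _) => ???? [????] [????]; qext; ring.
under eq_bigr => i _ do under eq_bigr => j _ do rewrite E.
under eq_bigr => i _ do rewrite -qsum_scale.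
rewrite -qsum_scale; exact: qnonneg_scale.
Qed.

Definition dsh (b : bool) : int := if b then 1 else 0.
Definition csg {R : realType} (sg : R) (b : bool) : quat R :=
  if b then Quat sg 0 0 0 else qone R.

Lemma mult_val {R : realType} (phi : int -> quat R) (sg : R) n : sg = 1 \/ sg = -1 ->
  mult dsh (csg sg) phi n =
  Quat (2 * qre (phi n) + sg * (qre (phi (n + 1)) + qre (phi (n - 1))))
       (2 * qi (phi n) + sg * (qi (phi (n + 1)) + qi (phi (n - 1))))
       (2 * qj (phi n) + sg * (qj (phi (n + 1)) + qj (phi (n - 1))))
       (2 * qk (phi n) + sg * (qk (phi (n + 1)) + qk (phi (n - 1)))).
Proof.
move=> s2; rewrite /mult !big_bool /= ?addr0 ?subr0 ?addrK.
case: (phi n) (phi (n + 1)) (phi (n - 1)) => ???? [????] [????].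
by case: s2 => ->; qext; ring.
Qed.

Lemma recur_aux {R : realType} (c x y z : R) : 2 + 2 * 1 * c != 0 ->
  (2 + 2 * 1 * c)^-1 * (2 * x + 1 * (y + z)) = x -> y + z = 2 * c * x.
Proof.
move=> nz e.
have := congr1 (fun w => (2 + 2 * 1 * c) * w) e; rewrite /= mulrA mulfV // mul1r => f.
apply/eqP; rewrite -subr_eq0; apply/eqP.
have -> : y + z - 2 * c * x = 1 * (2 * x + (y + z)) - (2 + 2 * 1 * c) * x by ring.
by rewrite f subrr.
Qed.

Lemma recur {R : realType} (phi : int -> quat R) : extreme_Pstar phi ->
  qre (phi 1) ^+ 2 < 1 ->
  forall n, qadd (phi (n + 1)) (phi (n - 1)) = qscale (2 * qre (phi 1)) (phi n).
Proof.
move=> [P ext] hc.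
have h1 := Pstar_herm 1 P.
move: hc; set c := qre (phi 1) => hc.
have cb : -1 < c < 1.
  apply/andP; split; nra.
have np : 2 + 2 * 1 * c != 0 by apply/eqP; nra.
have nm : 2 + 2 * (-1) * c != 0 by apply/eqP; nra.
pose psi (sg : R) n := qscale ((2 + 2 * sg * c)^-1) (mult dsh (csg sg) phi n).
have Ppsi : forall sg, (sg = 1 \/ sg = -1) -> Pstar (psi sg).
  move=> sg hs; split.
    apply: pos_def_scale; last exact: pos_def_mult P.1.
    by rewrite invr_ge0; case: hs => ->; nra.
  rewrite /psi mult_val // add0r sub0r h1 P.2 /=.
  have nz : 2 + 2 * sg * c != 0 by case: hs => ->.
  qext; rewrite -/c; try field => //; ring.
have T : 0 < (1 + c) / 2 < 1 by apply/andP; split; lra.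
have D : forall n, phi n = qadd (qscale ((1 + c) / 2) (psi 1 n))
                                (qscale (1 - (1 + c) / 2) (psi (-1) n)).
  move=> n; rewrite /psi !mult_val; [|by right|by left].
  have np2 : (2 + -2 * c != 0) && (2 + 2 * c != 0).
    by apply/andP; split; apply/eqP; nra.
  by case: (phi n) (phi (n+1)) (phi (n - 1)) => ???? [????] [????]; qext;
    field; exact: np2.
have {}ext := ext _ _ _ T (Ppsi 1 (or_introl erefl)) (Ppsi (-1) (or_intror erefl)) D.
move=> n; have := (ext n).1; rewrite /psi mult_val; last by left.
case: (phi n) (phi (n+1)) (phi (n - 1)) => x0 x1 x2 x3 [y0 y1 y2 y3] [z0 z1 z2 z3].
move=> e.
have e0 := congr1 (@qre R) e; have e1 := congr1 (@qi R) e.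
have e2 := congr1 (@qj R) e; have e3 := congr1 (@qk R) e.
move: e0 e1 e2 e3 => /= e0 e1 e2 e3.
by qext; apply: recur_aux.
Qed.

Definition qpowN {R : realType} (e : quat R) (k : nat) : quat R :=
  iter k (fun x => qmul x e) (qone R).

Definition hpow {R : realType} (e : quat R) (n : int) : quat R :=
  match n with Posz k => qpowN e k | Negz k => qpowN (qconj e) k.+1 end.

Lemma hpow_step {R : realType} (e : quat R) : qunit e ->
  forall n, hpow e (n + 1) = qmul (hpow e n) e.
Proof.
move=> ue; have ce : qmul (qconj e) e = qone R by rewrite qconj_normE qnorm_one.
case=> k.
  by have -> : Posz k + 1 = Posz k.+1 by lia.
case: k => [|k].
  have -> : Negz 0 + 1 = Posz 0 by lia.
  by rewrite /= qmul1q ce.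
have -> : Negz k.+1 + 1 = Negz k by lia.
by rewrite /hpow /qpowN /= -qmulA ce qmulq1.
Qed.

Lemma hpow_hom {R : realType} (e : quat R) : qunit e -> hom_to_S (hpow e).
Proof. by move=> ue; apply: (hom_of_step (e := e)) => //; exact: hpow_step. Qed.

Lemma hom_rec {R : realType} (h : int -> quat R) : hom_to_S h ->
  forall n, qadd (h (n + 1)) (h (n - 1)) = qscale (2 * qre (h 1)) (h n).
Proof.
move=> H n.
rewrite !H.1 hom_neg //.
case: (h n) (h 1) => ???? [????]; qext; ring.
Qed.

Lemma qadd_cancel {R : realType} (a a' b : quat R) : qadd a b = qadd a' b -> a = a'.
Proof.
case: a a' b => ???? [????] [????] e.
have e0 := congr1 (@qre R) e; have e1 := congr1 (@qi R) e.
have e2 := congr1 (@qj R) e; have e3 := congr1 (@qk R) e.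
move: e0 e1 e2 e3 => /= e0 e1 e2 e3; qext; lra.
Qed.

Lemma rec_unique {R : realType} (f g : int -> quat R) (k : R) :
  (forall n, qadd (f (n + 1)) (f (n - 1)) = qscale k (f n)) ->
  (forall n, qadd (g (n + 1)) (g (n - 1)) = qscale k (g n)) ->
  f 0 = g 0 -> f 1 = g 1 -> forall n, f n = g n.
Proof.
move=> rf rg f0 f1.
suff H : forall n, f n = g n /\ f (n + 1) = g (n + 1) by move=> n; case: (H n).
apply: int_ind2; first by rewrite add0r.
  move=> n [e1 e2]; split => //.
  apply: (@qadd_cancel _ _ _ (f n)).
  have := rf (n + 1); rewrite addrK => ->.
  by rewrite e2 e1 -rg addrK.
move=> n [e1 e2]; split; last by rewrite subrK.
apply: (@qadd_cancel _ _ _ (f (n + 1))).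
rewrite qaddC rf e2 e1 -rg qaddC.
by [].
Qed.

Lemma comb_rec {R : realType} (f g : int -> quat R) (k a b : R) :
  (forall n, qadd (f (n + 1)) (f (n - 1)) = qscale k (f n)) ->
  (forall n, qadd (g (n + 1)) (g (n - 1)) = qscale k (g n)) ->
  forall n, qadd (qadd (qscale a (f (n + 1))) (qscale b (g (n + 1))))
                 (qadd (qscale a (f (n - 1))) (qscale b (g (n - 1)))) =
            qscale k (qadd (qscale a (f n)) (qscale b (g n))).
Proof.
move=> rf rg n.
have E : forall x1 x2 y1 y2 : quat R,
  qadd (qadd (qscale a x1) (qscale b y1)) (qadd (qscale a x2) (qscale b y2)) =
  qadd (qscale a (qadd x1 x2)) (qscale b (qadd y1 y2)).
  by move=> [????] [????] [????] [????]; qext; ring.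
rewrite E rf rg.
by case: (f n) (g n) => ???? [????]; qext; ring.
Qed.

Lemma ext_unit {R : realType} (phi : int -> quat R) : extreme_Pstar phi -> qunit (phi 1).
Proof.
move=> E; have P := E.1; have ext := E.2.
have le := Pstar_le1 1 P.
have [h1|hs] : qnorm2 (phi 1) = 1 \/ qnorm2 (phi 1) < 1.
  by move: le; rewrite le_eqVlt => /orP [/eqP ->|->]; [left|right].
  exact: h1.
exfalso.
have rec := recur E.
move: hs rec; rewrite /qnorm2.
set c := qre (phi 1); set v1 := qi (phi 1); set v2 := qj (phi 1); set v3 := qk (phi 1).
move=> hs rec.
have hc : c ^+ 2 < 1 by have := sqr_ge0 v1; have := sqr_ge0 v2; have := sqr_ge0 v3; lra.
have {}rec := rec hc.
set nv2 := v1 ^+ 2 + v2 ^+ 2 + v3 ^+ 2.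
have nv2_ge0 : 0 <= nv2 by rewrite /nv2; have := sqr_ge0 v1; have := sqr_ge0 v2; have := sqr_ge0 v3; lra.
set w := Num.sqrt (1 - c ^+ 2).
have w2 : w ^+ 2 = 1 - c ^+ 2 by rewrite sqr_sqrtr //; lra.
have w0 : 0 < w by rewrite sqrtr_gt0; lra.
set nv := Num.sqrt nv2.
have nvsq : nv ^+ 2 = nv2 by rewrite sqr_sqrtr.
have nv0 : 0 <= nv by exact: sqrtr_ge0.
have nvw : nv < w by rewrite ltr_sqrt; [rewrite /nv2; lra | lra].
set I := if nv == 0 then Quat 0 1 0 0 else Quat 0 (v1 / nv) (v2 / nv) (v3 / nv).
have I1 : qi I ^+ 2 + qj I ^+ 2 + qk I ^+ 2 = 1.
  rewrite /I; case: eqP => [//= _|/eqP nz /=]; first by ring.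
  rewrite !expr_div_n -!mulrDl.
  by rewrite -/nv2 -nvsq mulfV // expf_neq0.
set ep := Quat c (w * qi I) (w * qj I) (w * qk I).
set em := Quat c (- (w * qi I)) (- (w * qj I)) (- (w * qk I)).
have uep : qunit ep by rewrite /qunit /qnorm2 /= !exprMn; rewrite -[X in _ = X]I1; nra.
have uem : qunit em by rewrite /qunit /qnorm2 /= !sqrrN !exprMn; rewrite -[X in _ = X]I1; nra.
set a := (1 + nv / w) / 2.
have wn : w != 0 by rewrite gt_eqF.
have a01 : 0 < a < 1.
  have q0 : 0 <= nv / w by apply: divr_ge0 => //; exact: ltW.
  have q1 : nv / w < 1 by rewrite ltr_pdivrMr // mul1r.
  by rewrite /a; apply/andP; split; lra.
have Hp := hpow_hom uep; have Hm := hpow_hom uem.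
have hp1 : hpow ep 1 = ep by rewrite /= qmul1q.
have hm1 : hpow em 1 = em by rewrite /= qmul1q.
have recp := hom_rec Hp; rewrite hp1 /= in recp.
have recm := hom_rec Hm; rewrite hm1 /= in recm.
have key : forall x, a * (w * x) + (1 - a) * - (w * x) = nv * x.
  by move=> x; rewrite /a; field.
have vz : nv = 0 -> v1 = 0 /\ v2 = 0 /\ v3 = 0.
  move=> nz; have : nv2 = 0 by rewrite -nvsq nz expr0n.
  rewrite /nv2 => h2.
  have z1 : v1 ^+ 2 = 0 by have := sqr_ge0 v1; have := sqr_ge0 v2; have := sqr_ge0 v3; lra.
  have z2 : v2 ^+ 2 = 0 by have := sqr_ge0 v1; have := sqr_ge0 v2; have := sqr_ge0 v3; lra.
  have z3 : v3 ^+ 2 = 0 by have := sqr_ge0 v1; have := sqr_ge0 v2; have := sqr_ge0 v3; lra.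
  by move: z1 z2 z3 => /eqP + /eqP + /eqP; rewrite !sqrf_eq0 => /eqP -> /eqP -> /eqP ->.
have D : forall n, phi n = qadd (qscale a (hpow ep n)) (qscale (1 - a) (hpow em n)).
{ apply: (rec_unique (k := 2 * c)) => //.
  - exact: comb_rec.
  - by rewrite P.2; qext; ring.
  rewrite hp1 hm1; qext; first by rewrite -/c; ring.
  all: rewrite /I /a; case: (eqVneq nv 0) => nz /=.
  all: rewrite -/v1 -/v2 -/v3.
  all: clearbody v1 v2 v3 nv.
  all: try (have [z1 [z2 z3]] := vz nz; rewrite nz mul0r ?z1 ?z2 ?z3; field; by []).
  all: field; by rewrite nz wn. }
have [e1 e2] := ext _ _ a a01 (hom_Pstar Hp) (hom_Pstar Hm) D 1.
rewrite hp1 in e1; rewrite hm1 in e2.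
have eq : ep = em by rewrite e1 e2.
have := congr1 (@qi R) eq; have := congr1 (@qj R) eq; have := congr1 (@qk R) eq.
rewrite /= => k3 k2 k1.
have : w * qi I = 0 by lra.
have : w * qj I = 0 by lra.
have : w * qk I = 0 by lra.
move=> /eqP + /eqP + /eqP; rewrite !mulf_eq0 (negbTE wn) /= => /eqP z3 /eqP z2 /eqP z1.
by move: I1; rewrite z1 z2 z3 expr0n /= !addr0 => /eqP; rewrite eq_sym oner_eq0.
Qed.

Theorem mainTheorem8 (R : realType) (phi : int -> quat R) :
  extreme_Pstar phi <-> hom_to_S phi.
Proof.
split; last exact: hom_extreme.
move=> E; have u := ext_unit E.
apply: (hom_of_step (e := phi 1)) => //; first exact: E.1.2.
by move=> n; apply: step_of_unit => //; exact: E.1.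
Qed.
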